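(* Let $\sigma$ be a regular expression having the HOMOGENEITY property with constant $D_\sigma$, let $C_\sigma$ be the integer such that for every $n\ge1$ the maximum number of $\sigma$-patterns among time series of length $n$ equals $\max(0,\lfloor (n-C_\sigma)/D_\sigma\rfloor)$, and let $\gamma(X,R)$ be the constraint $\mathrm{nb}\_\sigma(X,R)$. Then the gap-to-loss condition is satisfied for $\gamma$, and for every ground time series $X$ of length $n$, $$\mathrm{Loss}_\gamma(X)=\mathrm{Gap}_\gamma(X)\cdot D_\sigma+(1-\mathrm{sgn}(R))\cdot(\min(n,C_\sigma)-1)+\max(0,n-C_\sigma)\bmod D_\sigma.$$
   Context: Signature of $X=\langle X_1,\dots,X_n\rangle$: the word $\langle S_1,\dots,S_{n-1}\rangle$ over $\Sigma=\{<,=,>\}$ with $S_i$ given by comparing $X_i$ and $X_{i+1}$. For $\sigma$ with integer constants $b_\sigma,a_\sigma$, whenever $\langle S_i,\dots,S_j\rangle$ is a maximal word matching $\sigma$, $\langle X_{i+b_\sigma},\dots,X_{j+1-a_\sigma}\rangle$ is a $\sigma$-pattern; $\mathrm{nb}\_\sigma(X,R)$ holds iff $R$ is the number of $\sigma$-patterns of $X$. Ground time series: fixed non-empty integer sequence. $\mathrm{Gap}_\gamma(X)$: maximum value of $R$ over time series of length $n$ minus the value of $R$ for $X$. $\mathrm{Loss}_\gamma(X)$: $n$ minus the length of a shortest time series with the same value of $R$. $\mathrm{sgn}$: signum. Gap-to-loss condition: there is a function $h$ with $\mathrm{Loss}_\gamma(X)=h(\mathrm{Gap}_\gamma(X),\mathrm{sgn}(R),n)$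 for all ground $X$ of length $n$. Seed transducer for $\sigma$: a deterministic finite transducer whose transitions are labelled by an input symbol in $\Sigma$ and an output symbol in $\{\mathtt{found},\mathtt{not\_found}\}$, such that on the signature of any time series the $\mathtt{found}$ outputs correspond bijectively to the $\sigma$-patterns (each $\mathtt{found}$ marks the discovery of a new maximal occurrence of $\sigma$). A $\mathtt{found}$-transition is one with output $\mathtt{found}$; a $\mathtt{found}$-path is a sequence of consecutive transitions containing at least one $\mathtt{found}$-transition, its length being its number of transitions. HOMOGENEITY property: (1) a seed transducer $T_\sigma$ for $\sigma$ exists (the paper phrases this as $\langle\sigma,b_\sigma\rangle$ being a recognisable pattern); (2) for every state of $T_\sigma$ that is the destination of a $\mathtt{found}$-transition, the length of the shortest $\mathtt{found}$-path starting from it is the same constant, denoted $D_\sigma$. *)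

(* Defs.v *)
From mathcomp Require Import all_boot all_order all_algebra.
Set Implicit Arguments. Unset Strict Implicit. Unset Printing Implicit Defensive.
Import Order.TTheory GRing.Theory Num.Theory.

Inductive cmp := CLt | CEq | CGt.

Definition cmpz (x y : int) : cmp :=
  if (x < y)%R then CLt else if x == y then CEq else CGt.

Fixpoint signature (X : seq int) : seq cmp :=
  match X with
  | x :: ((y :: _) as t) => cmpz x y :: signature t
  | _ => [::]
  end.

Inductive regex :=
  | RVoid
  | REps
  | RSym of cmp
  | RAlt of regex & regex
  | RCat of regex & regex
  | RStar of regex.

Inductive matches : regex -> seq cmp -> Prop :=
  | m_eps : matches REps [::]
  | m_sym a : matches (RSym a) [:: a]
  | m_altl r1 r2 w : matches r1 w -> matches (RAlt r1 r2) w
  | m_altr r1 r2 w : matches r2 w -> matches (RAlt r1 r2) w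
  | m_cat r1 r2 w1 w2 : matches r1 w1 -> matches r2 w2 -> matches (RCat r1 r2) (w1 ++ w2)
  | m_star0 r : matches (RStar r) [::]
  | m_starS r w1 w2 : matches r w1 -> matches (RStar r) w2 -> matches (RStar r) (w1 ++ w2).

(* The factor <S_i, ..., S_j> of s (0-based, i <= j < size s). *)
Definition factor (s : seq cmp) (i j : nat) : seq cmp := take (j - i).+1 (drop i s).

Definition occurrence (sigma : regex) (s : seq cmp) (p : nat * nat) : Prop :=
  p.1 <= p.2 < size s /\ matches sigma (factor s p.1 p.2).

Definition maximal_occurrence (sigma : regex) (s : seq cmp) (p : nat * nat) : Prop :=
  occurrence sigma s p /\
  forall q : nat * nat, occurrence sigma s q -> q.1 <= p.1 -> p.2 <= q.2 -> q = p.

(* nb_sigma(X, R): R is the number of sigma-patterns of X, i.e. the number of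
   maximal occurrences of sigma in the signature of X (each maximal occurrence
   <S_i..S_j> yields exactly one sigma-pattern <X_{i+b},...,X_{j+1-a}>). *)
Definition nb_sigma (sigma : regex) (X : seq int) (R : nat) : Prop :=
  exists ps : seq (nat * nat),
    [/\ uniq ps,
        (forall p, p \in ps <-> maximal_occurrence sigma (signature X) p)
      & size ps = R].

Definition is_max_nb (sigma : regex) (n : nat) (M : int) : Prop :=
  (exists X : seq int, exists R : nat, [/\ size X = n, nb_sigma sigma X R & Posz R = M]) /\
  (forall (X : seq int) (R : nat), size X = n -> nb_sigma sigma X R -> (Posz R <= M)%R).

Definition is_min_len (sigma : regex) (R0 : nat) (l : nat) : Prop :=
  (exists Y : seq int, [/\ size Y = l, 0 < l & nb_sigma sigma Y R0]) /\
  (forall Y : seq int, 0 < size Y -> nb_sigma sigma Y R0 -> l <= size Y).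

(* Deterministic finite transducers over Sigma with outputs found/not_found
   (true = found).  The transition function is total. *)
Record transducer := Transducer {
  tstate : finType;
  tinit : tstate;
  tdelta : tstate -> cmp -> tstate * bool
}.

Fixpoint nfound (T : transducer) (q : tstate T) (w : seq cmp) : nat :=
  match w with
  | [::] => 0
  | a :: w' => let: (q', b) := tdelta q a in b + nfound q' w'
  end.

(* seed transducer for sigma: on the signature of every time series, the found
   outputs are in bijection with the sigma-patterns (same number). *)
Definition seed_transducer (sigma : regex) (T : transducer) : Prop :=
  forall X : seq int, 0 < size X -> nb_sigma sigma X (nfound (tinit T) (signature X)).

Definition found_destination (T : transducer) (q : tstate T) : Prop :=
  exists (p : tstate T) (a : cmp), tdelta p a = (q, true).

(* A path of consecutive transitions from q is determined by its input word w
   (determinism); it is a found-path iff it outputs at least one found.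
   shortest found-path from q has length D: *)
Definition shortest_found_path (T : transducer) (q : tstate T) (D : nat) : Prop :=
  (exists w : seq cmp, size w = D /\ 0 < nfound q w) /\
  (forall w : seq cmp, 0 < nfound q w -> D <= size w).

Definition homogeneous (sigma : regex) (D : nat) : Prop :=
  exists T : transducer, seed_transducer sigma T /\
    forall q : tstate T, found_destination q -> shortest_found_path q D.

(* Main.v *)
Require Import Defs.
From mathcomp Require Import all_boot all_order all_algebra.
From mathcomp Require Import zify.
Import Order.TTheory GRing.Theory Num.Theory.
Local Open Scope ring_scope.

Lemma nb_single (sigma : regex) (x : int) (R : nat) :
  nb_sigma sigma [:: x] R -> R = 0%N.
Proof.
case=> ps [_ Hm <-].
case: ps Hm => [|p ps] Hm //.
have := (Hm p).1 (mem_head _ _).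
by case=> [[/andP [_ H]] _].
Qed.

Lemma nb_single0 (sigma : regex) : nb_sigma sigma [:: 0] 0.
Proof.
exists [::]; split => // p; split => //.
by case=> [[/andP [_ H]] _].
Qed.

Lemma max_uniq sigma n M M' :
  is_max_nb sigma n M -> is_max_nb sigma n M' -> M = M'.
Proof.
move=> [[X [R [s1 h1 e1]]] u1] [[X' [R' [s2 h2 e2]]] u2].
apply/le_anti/andP; split.
- by rewrite -e1; apply: u2 h1.
- by rewrite -e2; apply: u1 h2.
Qed.

Lemma maxP0 (a : int) : Num.max 0 a = (if (0 <= a) then a else 0).
Proof. rewrite /Order.max. case: (ltrP 0 a) => h; case: (lerP 0 a) => h' //; lia. Qed.

Lemma minP0 (a b : int) : Num.min a b = (if (a <= b) then a else b).
Proof. rewrite /Order.min. case: (ltrP a b) => h; case: (lerP a b) => h' //; lia. Qed.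

Lemma key (sigma : regex) (D : nat) (C : int) :
  (forall n : nat, (0 < n)%N ->
     is_max_nb sigma n (Num.max 0 ((n%:Z - C) %/ D%:Z)%Z)) ->
  (forall (X : seq int) (R : nat) (M : int) (l : nat),
     (0 < size X)%N -> nb_sigma sigma X R -> is_max_nb sigma (size X) M ->
     is_min_len sigma R l ->
     let n := size X in
     n%:Z - l%:Z =
       (M - R%:Z) * D%:Z
       + (1 - sgz (R%:Z)) * (Num.min n%:Z C - 1)
       + ((Num.max 0 (n%:Z - C)) %% D%:Z)%Z).
Proof.
move=> Hmax X R M l Xpos XR XM [[Y [Ysz lpos YR]] lmin] n.
have -> : M = Num.max 0 ((n%:Z - C) %/ D%:Z)%Z by apply: max_uniq XM (Hmax _ Xpos).
have Hub : forall (Z : seq int) (R' : nat), (0 < size Z)%N -> nb_sigma sigma Z R' ->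
   (R'%:Z <= Num.max 0 (((size Z)%:Z - C) %/ D%:Z)%Z).
  by move=> Z R' Zp ZR; case: (Hmax _ Zp) => _ H; apply: H ZR.
have Rn := Hub X R Xpos XR.
rewrite -/n in Rn.
case: (posnP D) => [D0 | Dpos].
  subst D.
  rewrite !divz0 !modz0 /= in Rn *.
  have R0 : R = 0%N by move: Rn; rewrite maxxx; lia.
  subst R.
  have l1 : l = 1%N by have := lmin [:: 0] erefl (nb_single0 sigma); rewrite /=; lia.
  subst l.
  rewrite maxxx sgz0 maxP0 minP0.
  case: ifP; case: ifP; lia.
have Dz : (0 < D%:Z) by rewrite ltz_nat.
case: (posnP R) => [R0 | Rpos].
  subst R.
  have l1 : l = 1%N by have := lmin [:: 0] erefl (nb_single0 sigma); rewrite /=; lia.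
  subst l.
  rewrite sgz0 !maxP0 minP0.
  have E := divz_eq (n%:Z - C) D%:Z.
  have r0 := modz_ge0 (n%:Z - C) (lt0r_neq0 Dz).
  have r1 := ltz_pmod (n%:Z - C) Dz.
  move: E r0 r1.
  case: (lerP 0 (n%:Z - C)) => h.
    generalize ((n%:Z - C) %/ D%:Z)%Z ((n%:Z - C) %% D%:Z)%Z => q r.
    case: ifP; case: ifP; nia.
  rewrite mod0z.
  generalize ((n%:Z - C) %/ D%:Z)%Z ((n%:Z - C) %% D%:Z)%Z => q r.
  case: ifP; case: ifP; nia.
have sR : sgz (R%:Z) = 1 by rewrite gtr0_sgz // ltz_nat.
rewrite sR subrr mul0r addr0.
have C1 : 1 - C < D%:Z.
  case: (Hmax 1%N erefl) => [[Z [R1 [Zs ZR e]]] _].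
  case: Z Zs ZR => [|z [|? ?]] //= _ ZR.
  have := @nb_single _ _ _ ZR => R10; subst R1.
  move: e; rewrite maxP0.
  have E := divz_eq (1 - C) D%:Z.
  have r0 := modz_ge0 (1 - C) (lt0r_neq0 Dz).
  have r1 := ltz_pmod (1 - C) Dz.
  move: E r0 r1.
  generalize ((1 - C) %/ D%:Z)%Z ((1 - C) %% D%:Z)%Z => q r.
  case: ifP; nia.
have Rl := Hub Y R (ltac:(by rewrite Ysz)) YR.
rewrite Ysz in Rl.
have Hl : (R%:Z * D%:Z <= l%:Z - C).
  move: Rl; rewrite maxP0.
  have E := divz_eq (l%:Z - C) D%:Z.
  have r0 := modz_ge0 (l%:Z - C) (lt0r_neq0 Dz).
  have r1 := ltz_pmod (l%:Z - C) Dz.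
  move: E r0 r1.
  generalize ((l%:Z - C) %/ D%:Z)%Z ((l%:Z - C) %% D%:Z)%Z => q r.
  case: ifP; nia.
(* attained at n0 = C + R D *)
have n0pos : 0 < C + R%:Z * D%:Z by nia.
have [n0 En0] : exists n0 : nat, n0%:Z = C + R%:Z * D%:Z.
  by exists (absz (C + R%:Z * D%:Z)); lia.
have n0p : (0 < n0)%N by rewrite -ltz_nat En0.
case: (Hmax n0 n0p) => [[Z [R0 [Zs ZR e]]] _].
have R0R : R0 = R.
  move: e; rewrite En0 (_ : C + R%:Z * D%:Z - C = R%:Z * D%:Z); last by lia.
  rewrite mulzK; last exact: lt0r_neq0.
  rewrite max_r ?ler0z //; lia.
subst R0.
have ln0 := lmin Z (ltac:(by rewrite Zs)) ZR.
rewrite Zs in ln0.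
have El : l%:Z = C + R%:Z * D%:Z by lia.
rewrite El !maxP0.
have E := divz_eq (n%:Z - C) D%:Z.
have r0 := modz_ge0 (n%:Z - C) (lt0r_neq0 Dz).
have r1 := ltz_pmod (n%:Z - C) Dz.
move: Rn; rewrite maxP0.
move: E r0 r1.
case: (lerP 0 (n%:Z - C)) => h.
  generalize ((n%:Z - C) %/ D%:Z)%Z ((n%:Z - C) %% D%:Z)%Z => q r.
  case: ifP; nia.
generalize ((n%:Z - C) %/ D%:Z)%Z ((n%:Z - C) %% D%:Z)%Z => q r.
case: ifP; nia.
Qed.

Theorem theorem5 (sigma : regex) (D : nat) (C : int) :
  homogeneous sigma D ->
  (forall n : nat, (0 < n)%N ->
     is_max_nb sigma n (Num.max 0 ((n%:Z - C) %/ D%:Z)%Z)) ->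
  (* gap-to-loss condition *)
  (exists h : int -> int -> nat -> int,
     forall (X : seq int) (R : nat) (M : int) (l : nat),
       (0 < size X)%N -> nb_sigma sigma X R -> is_max_nb sigma (size X) M ->
       is_min_len sigma R l ->
       (size X)%:Z - l%:Z = h (M - R%:Z) (sgz (R%:Z)) (size X)) /\
  (* explicit formula *)
  (forall (X : seq int) (R : nat) (M : int) (l : nat),
     (0 < size X)%N -> nb_sigma sigma X R -> is_max_nb sigma (size X) M ->
     is_min_len sigma R l ->
     let n := size X in
     n%:Z - l%:Z =
       (M - R%:Z) * D%:Z
       + (1 - sgz (R%:Z)) * (Num.min n%:Z C - 1)
       + ((Num.max 0 (n%:Z - C)) %% D%:Z)%Z).
Proof.
move=> _ Hmax; split; last exact: key.
exists (fun g s n => g * D%:Z + (1 - s) * (Num.min n%:Z C - 1)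
                     + ((Num.max 0 (n%:Z - C)) %% D%:Z)%Z).
move=> X R M l Xp XR XM Hl; exact: key Hmax X R M l Xp XR XM Hl.
Qed.
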